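(* Suppose each vertex $v_i$ of $P$ initially knows the value of $X[i,\ge j]$ for all $j>i$. Then there exists an $O(\zeta)$-round deterministic $\mathsf{CONGEST}$ algorithm that lets each vertex $v_i$ of $P$ compute $X[\le i,\ge i+1]$.
   Context: $G=(V,E)$ is an unweighted directed graph with $n=|V|$, also the communication network. $\mathsf{CONGEST}$: synchronous rounds, each vertex may send an $O(\log n)$-bit message to each neighbour per round, unique identifiers, unlimited local computation. $P=(s=v_0,\dots,v_{h_{st}}=t)$ is a given shortest $s$-$t$ path whose vertices know their indices, and $\zeta\ge1$ is a threshold. For $i<j$, $X[i,j]$ is the shortest length of an $s$-$t$ path consisting of the subpath of $P$ from $s$ to $v_i$, then a detour path from $v_i$ to $v_j$ with at most $\zeta$ edges sharing no edge with $P$, then the subpath of $P$ from $v_j$ to $t$ ($\infty$ if none exists). Further $X[i,\ge j]=\min_{j'\ge j}X[i,j']$ and $X[\le i,\ge j]=\min_{i'\le i}\min_{j'\ge j}X[i',j']$ (minimum over an empty set is $\infty$). *)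

(* Defs.v *)
From mathcomp Require Import all_boot.
Set Implicit Arguments. Unset Strict Implicit. Unset Printing Implicit Defensive.

(* G u v).  The given shortest s-t path P is (s :: ps), i.e.                 *)
(* v_0 = s, v_k = nth s (s :: ps) k, h_st = size ps, t = last s ps.          *)
Section Paths.
Variables (n : nat) (G : rel 'I_n) (s : 'I_n) (ps : seq 'I_n) (zeta : nat).

Definition hst : nat := size ps.
Definition vP (k : nat) : 'I_n := nth s (s :: ps) k.
Definition tP : 'I_n := last s ps.

Definition is_walk (x : 'I_n) (q : seq 'I_n) (y : 'I_n) : bool :=
  path G x q && (last x q == y).

Definition shortest_path : Prop :=
  is_walk s ps tP /\ forall q, is_walk s q tP -> size ps <= size q.

Definition Pedge (a b : 'I_n) : bool :=
  has (fun k => (a == vP k) && (b == vP k.+1)) (iota 0 hst).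

Definition detour (i j : nat) (q : seq 'I_n) : bool :=
  [&& is_walk (vP i) q (vP j), size q <= zeta
    & all (fun e => ~~ Pedge e.1 e.2) (zip (vP i :: q) q)].

(* L is the length of an s-t path  P[s,v_i] . detour . P[v_j,t]  *)
Definition Xval (i j L : nat) : Prop :=
  i < j <= hst /\ exists q, detour i j q /\ L = i + size q + (hst - j).

(* m is the minimum of the set S of naturals (None = infinity = empty set) *)
Definition omin (S : nat -> Prop) (m : option nat) : Prop :=
  match m with
  | None => forall L, ~ S L
  | Some a => S a /\ forall L, S L -> a <= L
  end.

Definition X_eq (i j : nat) (m : option nat) : Prop := omin (Xval i j) m.
Definition X_ge (i j : nat) (m : option nat) : Prop :=
  omin (fun L => exists j', j <= j' /\ Xval i j' L) m.
Definition X_le_ge (i j : nat) (m : option nat) : Prop :=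
  omin (fun L => exists i' j', [/\ i' <= i, j <= j' & Xval i' j' L]) m.

End Paths.

Record local_info := LocalInfo {
  li_n : nat;
  li_zeta : nat;
  li_id : nat;
  li_outnb : nat -> bool;
  li_innb : nat -> bool;
  li_pidx : option nat;           (* Some i iff the vertex is v_i on P *)
  li_input : nat -> option nat    (* local input (for v_i: j |-> X[i,>=j]) *)
}.

(* A deterministic CONGEST algorithm (unlimited local computation):        *)
(* local state, initialisation, message to the neighbour with a given id,  *)
(* state update from the received messages (indexed by sender id), output. *)
Record congest_alg := CongestAlg {
  alg_state : Type;
  alg_init : local_info -> alg_state;
  alg_send : alg_state -> nat -> seq bool;
  alg_recv : alg_state -> (nat -> option (seq bool)) -> alg_state;
  alg_out : alg_state -> option nat
}.

Arguments alg_init : clear implicits.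
Arguments alg_send : clear implicits.
Arguments alg_recv : clear implicits.
Arguments alg_out : clear implicits.

Section Execution.
Variables (n : nat) (G : rel 'I_n) (id : 'I_n -> nat) (s : 'I_n)
  (ps : seq 'I_n) (zeta : nat) (inp : 'I_n -> nat -> option nat).

(* communication links: the underlying undirected graph (no self-loops) *)
Definition nb (u v : 'I_n) : bool := (u != v) && (G u v || G v u).

Definition pidx (v : 'I_n) : option nat :=
  if v \in s :: ps then Some (index v (s :: ps)) else None.

Definition linfo (v : 'I_n) : local_info :=
  LocalInfo n zeta (id v)
    (fun x => [exists u, [&& u != v, G v u & id u == x]])
    (fun x => [exists u, [&& u != v, G u v & id u == x]])
    (pidx v) (inp v).

Fixpoint run (A : congest_alg) (t : nat) : 'I_n -> alg_state A :=
  match t with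
  | 0 => fun v => alg_init A (linfo v)
  | t'.+1 =>
      let st := run A t' in
      fun v => alg_recv A (st v)
        (fun x => if [pick u | nb u v && (id u == x)] is Some u
                  then Some (alg_send A (st u) (id v)) else None)
  end.

Definition bandwidth_ok (A : congest_alg) (c T : nat) : Prop :=
  forall t u v, t < T -> nb u v ->
    size (alg_send A (run A t u) (id v)) <= c * (trunc_log 2 n).+1.

End Execution.

(* Main.v *)
Require Import Defs.
From mathcomp Require Import all_boot zify.
From Stdlib Require Import ClassicalEpsilon.
Set Implicit Arguments. Unset Strict Implicit. Unset Printing Implicit Defensive.

Section PathFacts.
Variables (n : nat) (G : rel 'I_n) (s : 'I_n) (ps : seq 'I_n) (zeta : nat).
Hypothesis SP : shortest_path G s ps.

Lemma vP_take k : k <= hst ps -> vP s ps k = last s (take k ps).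
Proof.
move=> hk; rewrite (last_nth s) size_take.
have -> : (if k < size ps then k else size ps) = k.
  by case: ltnP => //; rewrite /hst in hk => h; apply/eqP; rewrite eqn_leq hk h.
rewrite /vP; case: k hk => [|m] hk //=.
by rewrite nth_take.
Qed.

Lemma walk_len a b q : a <= b -> b <= hst ps ->
  is_walk G (vP s ps a) q (vP s ps b) -> b - a <= size q.
Proof.
move=> hab hb /andP [pq /eqP lq].
case: SP => /andP [pps /eqP lps] mn.
have ha : a <= hst ps by apply: leq_trans hb.
have := mn (take a ps ++ q ++ drop b ps).
have Hp := pps; rewrite -[ps](cat_take_drop b) cat_path in Hp.
case/andP: Hp => _ Hpd.
have Hp2 := pps; rewrite -[ps](cat_take_drop a) cat_path in Hp2.
case/andP: Hp2 => Hpt _.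
have Ea := vP_take ha; have Eb := vP_take hb.
have Hw : is_walk G s (take a ps ++ q ++ drop b ps) (tP s ps).
  apply/andP; split.
    rewrite cat_path -Ea Hpt /= cat_path pq /= lq Eb //.
  rewrite last_cat -Ea last_cat lq Eb -last_cat cat_take_drop.
  by rewrite /tP.
move=> /(_ Hw); rewrite !size_cat size_take size_drop.
rewrite /hst in hb ha *.
case: ltnP => h; lia.
Qed.

Lemma P_uniq : uniq (s :: ps).
Proof.
apply/(uniqP s) => a b; rewrite !inE => ha hb E.
wlog lab : a b ha hb E / a <= b.
  move=> W; case: (leqP a b) => h; first exact: W.
  by symmetry; apply: W => //; apply: ltnW.
have hb' : b <= hst ps by rewrite /hst; rewrite /= in hb.
have := @walk_len a b [::] lab hb'.
rewrite /is_walk /= /vP E eqxx => /(_ isT); lia.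
Qed.

Lemma hst_lt : hst ps < n.
Proof.
have := uniq_leq_size P_uniq (fun x _ => mem_enum _ x).
by rewrite size_enum_ord.
Qed.

Lemma pidx_vP i : i <= hst ps -> pidx s ps (vP s ps i) = Some i.
Proof.
move=> hi; rewrite /pidx /vP mem_nth ?index_uniq //; first exact: P_uniq.
Qed.

Lemma pidx_inv u k : pidx s ps u = Some k -> k <= hst ps /\ u = vP s ps k.
Proof.
rewrite /pidx; case: ifP => // hu [<-]; split.
  by rewrite -ltnS; have := hu; rewrite -index_mem.
by rewrite /vP nth_index.
Qed.

End PathFacts.

Section Sem.
Variables (n : nat) (G : rel 'I_n) (s : 'I_n) (ps : seq 'I_n) (zeta : nat).
Hypothesis SP : shortest_path G s ps.

Definition Rd : rel 'I_n := fun u v => G u v && ~~ Pedge s ps u v.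

Lemma path_Rd x q : path Rd x q =
  path G x q && all (fun e => ~~ Pedge s ps e.1 e.2) (zip (x :: q) q).
Proof.
elim: q x => [|y q IH] x //=.
rewrite IH /Rd; case: (G x y); case: (Pedge s ps x y); by rewrite ?andbF.
Qed.

Definition Sset (i j L : nat) : Prop :=
  exists i' j', [/\ i' <= i, j <= j' & Xval G s ps zeta i' j' L].

Lemma Xval_le i j L : Xval G s ps zeta i j L -> j <= i + zeta.
Proof.
case=> /andP [hij hj] [q [/and3P [hw hz _] _]].
have := walk_len SP (ltnW hij) hj hw; lia.
Qed.

Lemma Xval_bound i j L : Xval G s ps zeta i j L ->
  exists L', L' < (hst ps) + n /\ Xval G s ps zeta i j L'.
Proof.
case=> /andP [hij hj] [q [/and3P [/andP [pq /eqP lq] hz ha] _]].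
have pR : path Rd (vP s ps i) q by rewrite path_Rd pq ha.
case: (shortenP pR) lq => q' pq' uq sub lq'.
have hsz : size q' <= size q by apply: uniq_leq_size; [case/andP: uq|].
have hn : size (vP s ps i :: q') <= n.
  by have := uniq_leq_size uq (fun x _ => mem_enum _ x); rewrite size_enum_ord.
exists (i + size q' + (hst ps - j)); split.
  rewrite /= in hn; move: (size q') hn => k hn; lia.
split; first by rewrite hij hj.
exists q'; split => //.
move: pq'; rewrite path_Rd => /andP [pG hA].
by rewrite /detour /is_walk pG lq' eqxx hA (leq_trans hsz hz).
Qed.

Lemma omin_ext (S1 S2 : nat -> Prop) m :
  (forall L, S1 L <-> S2 L) -> omin S1 m -> omin S2 m.
Proof.
move=> E; case: m => [a|] /=.
  by case=> /E h1 h2; split => // L /E; apply: h2.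
by move=> h L /E; apply: h.
Qed.

Definition ocomb (a b : option nat) : option nat :=
  match a, b with
  | None, x => x
  | x, None => x
  | Some x, Some y => Some (minn x y)
  end.

Lemma omin_union (S1 S2 : nat -> Prop) m1 m2 :
  omin S1 m1 -> omin S2 m2 -> omin (fun L => S1 L \/ S2 L) (ocomb m1 m2).
Proof.
case: m1 => [a|]; case: m2 => [b|] /=.
- move=> [h1 h1'] [h2 h2']; split.
    by rewrite /minn; case: ltnP => _; [left|right].
  by move=> L [/h1' | /h2']; rewrite geq_min => ->; rewrite ?orbT.
- move=> [h1 h1'] h2; split; first by left.
  by move=> L [/h1' // | /h2].
- move=> h1 [h2 h2']; split; first by right.
  by move=> L [/h1 // | /h2'].
- by move=> h1 h2 L [/h1|/h2].
Qed.

Lemma Sset_far i j L : i + zeta <= j ->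
  Sset i j L <-> exists j', j <= j' /\ Xval G s ps zeta i j' L.
Proof.
move=> hij; split.
  case=> i' [j' [hi hj hX]]; have := Xval_le hX => h.
  have ei : i' = i by lia.
  by subst; exists j'.
by case=> j' [hj hX]; exists i, j'.
Qed.

Lemma Sset_step i j L : 0 < i ->
  Sset i j L <-> (exists j', j <= j' /\ Xval G s ps zeta i j' L) \/ Sset i.-1 j L.
Proof.
move=> hi; split.
  case=> i' [j' [hi' hj hX]].
  case: (ltnP i' i) => h.
    by right; exists i', j'; split => //; lia.
  have ei : i' = i by lia.
  by subst; left; exists j'.
case=> [[j' [hj hX]]|[i' [j' [hi' hj hX]]]].
  by exists i, j'.
by exists i', j'; split => //; lia.
Qed.

Lemma Sset_zero j L :
  Sset 0 j L <-> exists j', j <= j' /\ Xval G s ps zeta 0 j' L.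
Proof.
split.
  by case=> i' [j' [hi hj hX]]; move: hi; rewrite leqn0 => /eqP ?; subst; exists j'.
by case=> j' [hj hX]; exists 0, j'.
Qed.

Lemma Sset_bound i j a : omin (Sset i j) (Some a) -> a < hst ps + n.
Proof.
case=> [[i' [j' [hi hj hX]]] hmin].
case: (Xval_bound hX) => L' [hL' hX'].
have := hmin L'; rewrite /Sset => /(_ (ex_intro _ i' (ex_intro _ j' (And3 hi hj hX')))).
lia.
Qed.

End Sem.

Fixpoint enc (w x : nat) : seq bool :=
  if w is w'.+1 then odd x :: enc w' x./2 else [::].
Fixpoint dec (m : seq bool) : nat :=
  if m is b :: m' then b + (dec m').*2 else 0.

Lemma size_enc w x : size (enc w x) = w.
Proof. by elim: w x => [|w IH] x //=; rewrite IH. Qed.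

Lemma dec_enc w x : x < 2 ^ w -> dec (enc w x) = x.
Proof.
elim: w x => [|w IH] x /=; first by rewrite expn0 ltnS leqn0 => /eqP.
move=> hx; rewrite IH; first exact: odd_double_half.
rewrite expnS in hx.
have := odd_double_half x; rewrite -mul2n; lia.
Qed.

Definition width (n : nat) := (trunc_log 2 n).+1.
Definition code (o : option nat) := if o is Some a then a.+1 else 0.
Definition uncode (k : nat) := if k is k'.+1 then Some k' else None.
Definition mkmsg w k o := enc w k ++ enc w.+1 (code o).
Definition midx w (m : seq bool) := dec (take w m).
Definition mval w (m : seq bool) := uncode (dec (drop w m)).

Lemma midx_mk w k o : k < 2 ^ w -> midx w (mkmsg w k o) = k.
Proof.
by move=> h; rewrite /midx /mkmsg -{1}(size_enc w k) take_size_cat // dec_enc.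
Qed.

Lemma mval_mk w k o : code o < 2 ^ w.+1 -> mval w (mkmsg w k o) = o.
Proof.
move=> h; rewrite /mval /mkmsg -{1}(size_enc w k) drop_size_cat // dec_enc //.
by case: o {h}.
Qed.

Record st := St { s_info : local_info; s_t : nat; s_T : nat -> option nat }.

Definition a_init (li : local_info) : st := St li 0 (li_input li).

Definition a_send (x : st) (_ : nat) : seq bool :=
  let li := s_info x in
  match li_pidx li with
  | Some k => if (s_t x).+1 < li_zeta li
              then mkmsg (width (li_n li)) k.+1 (s_T x (k + li_zeta li - s_t x))
              else [::]
  | None => [::]
  end.

Definition recvv w (msgs : nat -> option (seq bool)) (i : nat) : option nat :=
  epsilon (inhabits None)
    (fun o => exists x m, [/\ msgs x = Some m, midx w m = i & o = mval w m]).

Definition a_recv (x : st) (msgs : nat -> option (seq bool)) : st :=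
  let li := s_info x in
  let t := s_t x in
  St li t.+1
   (match li_pidx li with
    | Some i =>
      if t.+1 < li_zeta li then
        fun j => if j == i + li_zeta li - t.+1 then
                   ocomb (li_input li j)
                     (if 0 < i then recvv (width (li_n li)) msgs i else None)
                 else s_T x j
      else s_T x
    | None => s_T x
    end).

Definition a_out (x : st) : option nat :=
  match li_pidx (s_info x) with Some i => s_T x i.+1 | None => None end.

Definition Alg : congest_alg := CongestAlg a_init a_send a_recv a_out.

Lemma run_info n (G : rel 'I_n) id s ps zeta inp t v :
  s_info (run G id s ps zeta inp Alg t v) = linfo G id s ps zeta inp v /\
  s_t (run G id s ps zeta inp Alg t v) = t.
Proof.
elim: t v => [|t IH] v //=.
by case: (IH v) => -> ->.
Qed.

Section Main.
Variables (n : nat) (G : rel 'I_n) (id : 'I_n -> nat) (s : 'I_n)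
  (ps : seq 'I_n) (zeta : nat) (inp : 'I_n -> nat -> option nat).
Hypotheses (Hid : injective id) (Hz : 0 < zeta) (SP : shortest_path G s ps)
  (Hinp : forall i j, i <= hst ps -> i < j ->
         X_ge G s ps zeta i j (inp (vP s ps i) j)).

Notation R := (run G id s ps zeta inp Alg).

Lemma width_gt : n < 2 ^ width n.
Proof. exact: trunc_log_ltn. Qed.

Lemma send_eq t u y : a_send (R t u) y =
  match pidx s ps u with
  | Some k' => if t.+1 < zeta then mkmsg (width n) k'.+1 (s_T (R t u) (k' + zeta - t)) else [::]
  | None => [::] end.
Proof. by have [Ei Et] := run_info G id s ps zeta inp t u; rewrite /a_send Ei Et. Qed.

Lemma P_edge k : k < hst ps -> G (vP s ps k) (vP s ps k.+1).
Proof.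
case: SP => /andP [pps _] _ hk.
by move/(pathP s): pps => /(_ k hk).
Qed.

Lemma run_inv t : forall i, i <= hst ps -> forall j, i + zeta - t <= j -> i < j ->
  omin (Sset G s ps zeta i j) (s_T (R t (vP s ps i)) j).
Proof.
elim: t => [|t IH] i hi j hj hij.
  rewrite /=; apply: omin_ext; last exact: Hinp.
  by move=> L; rewrite Sset_far //; lia.
have [Ei Et] := run_info G id s ps zeta inp t (vP s ps i).
rewrite /= /a_recv Ei Et /= (pidx_vP SP hi).
case: ifP => ht; last first.
  apply: IH => //; lia.
case: eqP => hj0; last first.
  apply: IH => //; lia.
subst j.
have hx := Hinp hi hij.
case: (posnP i) => hi0.
  subst i; rewrite /=.
  have -> : forall o, ocomb o None = o by case.
  by apply: omin_ext hx => L; rewrite Sset_zero.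
(* the message from the predecessor *)
set k := i.-1.
have hk : k <= hst ps by rewrite /k; lia.
have ek : k.+1 = i by rewrite /k; lia.
set j0 := i + zeta - t.+1.
have IHk := IH k hk j0 ltac:(rewrite /j0 /k; lia) ltac:(rewrite /j0 /k; lia).
have hn := hst_lt SP.
have Ew := width_gt.
have -> : recvv (width n) (fun x => if [pick u | nb G u (vP s ps i) && (id u == x)] is Some u
             then Some (a_send (R t u) (id (vP s ps i))) else None) i
          = s_T (R t (vP s ps k)) j0.
  rewrite /recvv.
  set P := (fun o => _).
  have E2 : j0 = k + zeta - t by rewrite /j0; lia.
  have Hb : code (s_T (R t (vP s ps k)) j0) < 2 ^ (width n).+1.
    case E: (s_T _ _) IHk => [a|] // IHk; last by rewrite /= expn_gt0.
    have := Sset_bound IHk.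
    rewrite expnS /=; lia.
  have : P (epsilon (inhabits None) P).
    apply: epsilon_spec.
    have Hpk : [pick u | nb G u (vP s ps i) && (id u == id (vP s ps k))] = Some (vP s ps k).
      case: pickP => [u /andP [_ /eqP /Hid ->] // | H].
      have := H (vP s ps k); rewrite eqxx andbT /nb.
      have -> : vP s ps i = vP s ps k.+1 by rewrite ek.
      rewrite P_edge ?orbT ?andbT; last lia.
      case: eqP => // E.
      have := pidx_vP SP hk; rewrite E (pidx_vP SP); [case; lia|lia].
    exists (s_T (R t (vP s ps k)) j0), (id (vP s ps k)).
    exists (a_send (R t (vP s ps k)) (id (vP s ps i))); split.
    - by rewrite Hpk.
    - rewrite send_eq (pidx_vP SP hk) ht midx_mk //; lia.
    - by rewrite send_eq (pidx_vP SP hk) ht -E2 mval_mk.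
  case=> x [m [Hm Hi ->]].
  move: Hm; case: pickP => [u _ | _] // [Em]; subst m.
  move: Hi; rewrite send_eq.
  case Eu: (pidx s ps u) => [k'|]; last by rewrite /midx /=; lia.
  have [hk' ->] := pidx_inv Eu.
  rewrite ht midx_mk; last lia.
  move=> Ek; have ekk : k' = k by lia.
  subst k'.
  by rewrite -E2 mval_mk.
apply: omin_ext (omin_union hx IHk) => L.
move: (Sset_step G s ps zeta j0 L hi0); rewrite /k; tauto.
Qed.

End Main.

Theorem lemma4p4 :
  exists (c : nat) (A : congest_alg),
    forall (n : nat) (G : rel 'I_n) (id : 'I_n -> nat) (s : 'I_n)
           (ps : seq 'I_n) (zeta : nat) (inp : 'I_n -> nat -> option nat),
      injective id ->
      0 < zeta ->
      shortest_path G s ps ->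
      (forall i j, i <= hst ps -> i < j ->
         X_ge G s ps zeta i j (inp (vP s ps i) j)) ->
      bandwidth_ok G id s ps zeta inp A c (c * zeta) /\
      (forall i, i <= hst ps ->
         X_le_ge G s ps zeta i i.+1
           (alg_out A (run G id s ps zeta inp A (c * zeta) (vP s ps i)))).
Proof.
exists 3, Alg => n G id s ps zeta inp Hid Hz SP Hinp; split.
  move=> t u v _ _; rewrite /= send_eq.
  case: (pidx s ps u) => [k|] //; case: ifP => // _.
  by rewrite size_cat !size_enc /width; lia.
move=> i hi.
have [Ei _] := run_info G id s ps zeta inp (3 * zeta) (vP s ps i).
rewrite /= /a_out Ei /= (pidx_vP SP hi).
have := @run_inv _ _ _ _ _ _ _ Hid Hz SP Hinp (3 * zeta) i hi i.+1; apply; lia.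
Qed.
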